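(* Let $U$ be a nonnegative, progressively measurable, right-continuous process and fix $t\ge0$. Let $A_t=\{\mathbb E[\int_t^\infty U_s^\theta ds\mid\mathcal F_t]>0\}$ and $$B_t=\bigcup_{T\in\mathbb Q,\,T\ge t}\ \bigcup_{\epsilon\in\mathbb Q,\,\epsilon>0}\big\{\mathbb E[\mathbf 1_{\{U_T\ge\epsilon\}}\mid\mathcal F_t]>0\big\}.$$ Then $\mathbb P(A_t\setminus B_t)=0$.
   Context: Work on a filtered probability space $(\Omega,\mathcal F,(\mathcal F_t)_{t\ge0},\mathbb P)$ with complete continuous filtration and trivial $\mathcal F_0$; $\theta>1$ is a fixed constant. *)

(* Defs.v *)
From HB Require Import structures.
From mathcomp Require Import all_boot all_order all_algebra.
From mathcomp Require Import all_classical all_reals all_analysis.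
From mathcomp Require Import measurable_realfun.
Set Implicit Arguments. Unset Strict Implicit. Unset Printing Implicit Defensive.
Import Order.TTheory GRing.Theory Num.Theory.
Import numFieldNormedType.Exports.
Local Open Scope classical_set_scope.
Local Open Scope ring_scope.

Section Defs.
Context {d : measure_display} {Omega : measurableType d} {R : realType}.

Definition filtration (F : R -> set (set Omega)) : Prop :=
  (forall t, 0 <= t -> sigma_algebra setT (F t)) /\
  (forall t, 0 <= t -> F t `<=` measurable) /\
  (forall s t, 0 <= s -> s <= t -> F s `<=` F t).

Definition complete_filtration (P : probability Omega R)
    (F : R -> set (set Omega)) : Prop :=
  forall N, measurable N -> P N = 0%E -> F 0 N.

Definition right_continuous_filtration (F : R -> set (set Omega)) : Prop :=
  forall t, 0 <= t -> F t = [set A | forall s, t < s -> F s A].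

Definition trivial_F0 (P : probability Omega R) (F : R -> set (set Omega))
  : Prop := forall A, F 0 A -> P A = 0%E \/ P A = 1%E.

Definition measurable_wrt (G : set (set Omega)) (f : Omega -> \bar R) : Prop :=
  forall B : set (\bar R), @measurable _ (\bar R) B -> G (f @^-1` B).

Definition cond_exp_version (P : probability Omega R) (G : set (set Omega))
    (X Y : Omega -> \bar R) : Prop :=
  (forall w, (0 <= Y w)%E) /\ measurable_wrt G Y /\
  (forall A, G A -> (\int[P]_(w in A) Y w = \int[P]_(w in A) X w)%E).

Definition progressive (F : R -> set (set Omega)) (U : R -> Omega -> R) : Prop :=
  forall t, 0 <= t -> forall B : set R, measurable B ->
    <<s `[0, t] `*` [set: Omega],
        [set C `*` D | C in [set C : set R | measurable C /\ C `<=` `[0, t]]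
                     & D in F t] >>
      ([set p | p.1 \in `[0, t] /\ U p.1 p.2 \in B]).

Definition right_continuous_paths (U : R -> Omega -> R) : Prop :=
  forall w s, 0 <= s -> (fun r => U r w) @ at_right s --> U s w.

End Defs.

(* Main.v *)
Require Import Defs.
From HB Require Import structures.
From mathcomp Require Import all_boot all_order all_algebra.
From mathcomp Require Import all_classical all_reals all_analysis.
From mathcomp Require Import measurable_realfun.
Set Implicit Arguments. Unset Strict Implicit. Unset Printing Implicit Defensive.
Import Order.TTheory GRing.Theory Num.Theory.
Import numFieldNormedType.Exports.
Local Open Scope classical_set_scope.
Local Open Scope ring_scope.

Import HBNNSimple.
Lemma int0_offnull d (T : measurableType d) (R : realType)
  (mu : {measure set T -> \bar R}) (D N : set T) (f : T -> \bar R) :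
  measurable N -> mu N = 0%E -> (forall x, (0 <= f x)%E) ->
  (forall x, D x -> ~ N x -> f x = 0%E) -> (\int[mu]_(x in D) f x = 0)%E.
Proof.
move=> mN N0 f0 fN; apply/eqP; rewrite eq_le integral_ge0 ?andbT//.
rewrite ge0_integralE//.
apply: ge_ereal_sup => _ [h /= hf <-].
rewrite -integralT_nnsfun.
rewrite -(integral0 mu setT).
apply: ae_ge0_le_integral => //.
- by move=> x _; rewrite lee_fin; exact: fun_ge0.
- exact/measurable_EFinP.
exists N; split => // x /= /not_implyP [_ hx]; apply: contrapT => Nx; apply: hx.
apply: le_trans (hf x) _.
rewrite patchE; case: ifPn => // /set_mem Dx.
by rewrite fN.
Qed.
Lemma sect_meas d (Omega : measurableType d) (R : realType)
  (G : set (set Omega)) (T : R) : 0 <= T -> G `<=` measurable ->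
  forall S, <<s `[0, T] `*` [set: Omega],
        [set C `*` D | C in [set C : set R | measurable C /\ C `<=` `[0, T]]
                     & D in G] >> S -> measurable [set w | S (T, w)].
Proof.
move=> T0 Gm; apply: smallest_sub.
- split.
  + by rewrite (_ : [set w | _] = set0) //; apply/seteqP; split=> w.
  + move=> A mA.
    rewrite (_ : [set w | _] = ~` [set w | A (T, w)]); first exact: measurableC.
    apply/seteqP; split=> w /=; first by case.
    move=> nA; split => //; split => //=.
    by rewrite in_itv /= T0 lexx.
  + move=> A mA; exact: bigcupT_measurable.
- move=> _ [C [mC CT] [D' GD <-]].
  have [CTT|nCT] := pselect (C T).
  + rewrite (_ : [set w | _] = D'); first exact: Gm.
    by apply/seteqP; split=> w /=; [case|].
  + rewrite (_ : [set w | _] = set0) //; apply/seteqP; split=> w //=.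
    by case.
Qed.

Lemma rc_zero (R : realType) (Omega : Type) (U : R -> Omega -> R) (t : R) w :
  (forall s w, 0 <= s -> 0 <= U s w) ->
  (forall w s, 0 <= s -> (fun r => U r w) @ at_right s --> U s w) -> 0 <= t ->
  (forall q : rat, t <= ratr q -> U (ratr q) w = 0) ->
  forall s, t <= s -> U s w = 0.
Proof.
move=> U0 rcp t0 Hq s ts; have s0 : 0 <= s := le_trans t0 ts.
apply/eqP; rewrite eq_le U0 // andbT leNgt; apply/negP => Us0.
have H : \forall r \near s^'+, 0 < U r w.
  exact: (@cvgr_gt R R _ _ _ _ (rcp w s s0) 0 Us0).
apply: ((not_near_at_rightP s (fun r => 0 < U r w)).2 _ H) => e.

have ltl : s < s + e%:num by rewrite ltrDl.
have [q /[!in_itv] /andP[sq qe]] := @rat_in_itvoo R s (s + e%:num) ltl.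
exists (ratr q); first exact/andP.
by rewrite Hq ?ltxx // (le_trans ts) // ltW.
Qed.
Theorem lemma8p3 (d : measure_display) (Omega : measurableType d)
  (R : realType) (P : probability Omega R) (F : R -> set (set Omega))
  (theta : R) (U : R -> Omega -> R) (t : R)
  (Y : Omega -> \bar R) (Z : rat -> rat -> Omega -> \bar R) :
  filtration F -> complete_filtration P F -> right_continuous_filtration F ->
  trivial_F0 P F -> 1 < theta ->
  (forall s w, 0 <= s -> 0 <= U s w) -> progressive F U ->
  right_continuous_paths U -> 0 <= t ->
  cond_exp_version P (F t)
    (fun w => (\int[@lebesgue_measure R]_(s in `[t, +oo[) (U s w `^ theta)%:E)%E) Y ->
  (forall T eps : rat, t <= ratr T -> 0 < eps ->
    cond_exp_version P (F t)
      (fun w => (\1_[set w' | ratr eps <= U (ratr T) w'] w)%:E) (Z T eps)) ->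
  let A := [set w | (0 < Y w)%E] in
  let B := [set w | exists T eps : rat,
                     [/\ t <= ratr T, 0 < eps & (0 < Z T eps w)%E]] in
  P (A `\` B) = 0%E.
Proof.
move=> [Fsig [Fm Fmono]] _ _ _ th1 U0 prog rcp t0 [Y0 [Ymeas Yint]] Zce A B.
have Ftsig := Fsig t t0.
have FtE : (F t).-sigma.-measurable = F t := measurable_g_measurableTypeE Ftsig.
have mpos : @measurable _ (\bar R) (`]0%E, +oo%E]%classic : set (\bar R)).
  exact: emeasurable_itv.
have posE (f : Omega -> \bar R) : f @^-1` `]0%E, +oo%E]%classic = [set w | (0 < f w)%E].
  by apply/seteqP; split => w /=; rewrite in_itv /= ?leey ?andbT.
have FB : F t B.
  rewrite -FtE.
  have -> : B = \bigcup_(T : rat) \bigcup_(e : rat)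
      [set w | (t <= ratr T /\ 0 < e) /\ (0 < Z T e w)%E].
    apply/seteqP; split => w /=.
      by move=> [T [e [tT e0 Zw]]]; exists T => //; exists e.
    by move=> [T _ [e _ [[tT e0] Zw]]]; exists T, e.
  apply: (@bigcupT_measurable_rat _ (g_sigma_algebraType (F t))) => T.
  apply: (@bigcupT_measurable_rat _ (g_sigma_algebraType (F t))) => e.
  have [[tT e0]|nc] := pselect (t <= ratr T /\ 0 < e).
    have -> : [set w | (t <= ratr T /\ 0 < e) /\ (0 < Z T e w)%E] =
        Z T e @^-1` `]0%E, +oo%E]%classic.
      rewrite posE; apply/seteqP; split => w /=; first by case.
      by move=> ?; split.
    rewrite FtE; exact: ((Zce T e tT e0).2.1).
  have -> : [set w | (t <= ratr T /\ 0 < e) /\ (0 < Z T e w)%E] = set0.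
    by apply/seteqP; split => w //= [].
  exact: measurable0.
pose Bc := ~` B.
have FBc : F t Bc by rewrite /Bc -setTD; by case: Ftsig => _ + _; apply.
have mBc : measurable Bc := Fm t t0 _ FBc.
have Zzero T e : t <= ratr T -> 0 < e -> forall w, Bc w -> Z T e w = 0%E.
  move=> tT e0 w Bw; apply/eqP; rewrite eq_le (Zce T e tT e0).1 andbT leNgt.
  by apply/negP => Zp; apply: Bw; exists T, e.
have mE T e : t <= ratr T ->
    measurable [set w | ratr e <= U (ratr T) w].
  move=> tT; have T0 : 0 <= ratr T :> R := le_trans t0 tT.
  have := @sect_meas d Omega R (F (ratr T)) (ratr T) T0 (Fm _ T0) _
    (prog (ratr T) T0 `[ratr e, +oo[%classic (measurable_itv _)).
  congr measurable; apply/seteqP; split => w /=.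
    by case => _ /set_mem /=; rewrite in_itv /= andbT.
  move=> h; split; first by rewrite in_itv /= T0 lexx.
  by apply/mem_set; rewrite /= in_itv /= h.
have Enull T e : t <= ratr T -> 0 < e ->
    P (Bc `&` [set w | ratr e <= U (ratr T) w]) = 0%E.
  move=> tT e0.
  have h1 := (Zce T e tT e0).2.2 Bc FBc.
  have h2 : (\int[P]_(w in Bc) Z T e w = 0)%E.
    by apply: integral0_eq => w; exact: Zzero.
  have h3 := integral_indic P mBc (mE T e tT).
  by rewrite setIC -h3 -h1 h2.
have [N [mN N0 HN]] : P.-negligible (\bigcup_(n : nat)
    (match (unpickle n : option (rat * rat)) with
     | Some (T, e) => [set w | (t <= ratr T /\ 0 < e) /\
                              (Bc w /\ ratr e <= U (ratr T) w)]
     | None => set0 end)).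
  apply: negligible_bigcup => n; case: (unpickle n) => [[T e]|]; last first.
    exact: negligible_set0.
  have [[tT e0]|nc] := pselect (t <= ratr T /\ 0 < e).
    exists (Bc `&` [set w | ratr e <= U (ratr T) w]); split.
    - by apply: measurableI => //; exact: mE.
    - exact: Enull.
    - by move=> w [_ []].
  by exists set0; split => // w [].
have NB T e : t <= ratr T -> 0 < e -> forall w, Bc w -> ~ N w ->
    U (ratr T) w < ratr e.
  move=> tT e0 w Bw nN; rewrite ltNge; apply/negP => h; apply: nN; apply: HN.
  exists (pickle (T, e)); first exact: I.
  rewrite pickleK; split; [by split|by split].
have Uzero w : Bc w -> ~ N w -> forall s, t <= s -> U s w = 0.
  move=> Bw nN; apply: rc_zero => // q tq.
  have q0 : 0 <= ratr q :> R := le_trans t0 tq.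
  apply/eqP; rewrite eq_le U0 // andbT leNgt; apply/negP => Up.
  have [r /[!in_itv] /andP[r0 rU]] := @rat_in_itvoo R 0 _ Up.
  have r0' : 0 < r by rewrite -(ltr0q R).
  have := NB q r tq r0' w Bw nN.
  by rewrite ltNge (ltW rU).
have th0 : theta != 0 by rewrite gt_eqF // (lt_trans ltr01 th1).
have Xint : (\int[P]_(w in Bc)
    (\int[@lebesgue_measure R]_(s in `[t, +oo[) (U s w `^ theta)%:E) = 0)%E.
  apply: (int0_offnull mN N0).
    by move=> w; apply: integral_ge0 => s _; rewrite lee_fin powR_ge0.
  move=> w Bw nN; apply: integral0_eq => s; rewrite /= in_itv /= andbT => ts.
  by rewrite Uzero // powR0.
have YBc := Yint Bc FBc; rewrite Xint in YBc.
have mY : measurable_fun Bc Y.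
  move=> _ V mV; apply: measurableI => //; apply: (Fm t t0); exact: Ymeas.
have absY : (\int[P]_(w in Bc) `|Y w| = 0)%E.
  by rewrite -YBc; apply: eq_integral => w _; rewrite gee0_abs.
have [N2 [mN2 N20 HN2]] := (ae_eq_integral_abs P mBc mY).1 absY.
have mA : measurable A.
  by rewrite /A -posE; apply: (Fm t t0); exact: Ymeas.
have mB : measurable B := Fm t t0 _ FB.
apply: (subset_measure0 (measurableD mA mB) mN2) N20.
move=> w [Aw nBw]; apply: HN2 => /= h.
by move: Aw; rewrite /A /= h // ltxx.
Qed.
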